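(* Let $c_{db}$ be large enough (depending only on $s,d$) so that the following holds: for any chain $Q_0\supset Q_1\supset\dots\supset Q_n$ in $\mathcal D$ with $Q_j$ a child of $Q_{j-1}$ and $Q_j$ not $p$-doubling for $1\le j\le n$, one has $\Theta(Q_j)\le 2^{-j/2}p(Q_0)$ for all $j$. Fix $Q\in\mathcal D$ and let $J\subset\mathcal D$ be a family of cubes contained in $Q$ such that for every $P\in J$, every cube $P'\in\mathcal D$ with $P\subset P'\subset Q$ is not $p$-doubling. Then $$\sigma(J)\le 2\,p(Q)^2\,\mu(Q).$$
   Context: $0<s<d$. $E\subset\mathbb R^d$ is a Cantor set built from a compact $Q^0$ by repeatedly choosing, inside each closed ''cube'' $Q$ of generation $k$, a finite nonempty family of closed children (the cubes of generation $k+1$), such that each child $Q'$ of $Q$ satisfies $\frac18\ell(Q)\le\ell(Q')\le\frac13\ell(Q)$, where $\ell(Q)=\operatorname{diam}(Q)$, and distinct children of $Q$ are at distance $\ge c_{sep}\ell(Q)$. $\mathcal D$ is the family of all such cubes. $\mu$ is a finite Borel measure supported on $E$ with $\mu(Q)>0$ for all $Q\in\mathcal D$. $\Theta(Q)=\mu(Q)/\ell(Q)^s$, $p(Q)=\sum_{P\in\mathcal D,\,P\supset Q}\frac{\ell(Q)}{\ell(P)}\Theta(P)$, $Q$ is $p$-doubling (with constant $c_{db}$) if $p(Q)\le c_{db}\Theta(Q)$, and for $\mathcal A\subset\mathcal D$, $\sigma(\mathcal A)=\sum_{P\in\mathcal A}\Theta(P)^2\mu(P)$. *)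

(* Defs.v *)
From HB Require Import structures.
From mathcomp Require Import all_boot all_order all_algebra.
From mathcomp Require Import all_classical all_reals all_analysis.
Set Implicit Arguments. Unset Strict Implicit. Unset Printing Implicit Defensive.
Import Order.TTheory GRing.Theory Num.Theory.
Import numFieldNormedType.Exports.
Local Open Scope classical_set_scope.
Local Open Scope ring_scope.

(* Points of R^d are row vectors 'rV[R]_d.  The ambient measurable space is
   R^d with its Borel sigma-algebra (generated by the open sets). *)
Definition Rd (R : realType) (d : nat) := g_sigma_algebraType (@open 'rV[R]_d).

Definition edist (R : realType) (d : nat) (x y : 'rV[R]_d) : R :=
  Num.sqrt (\sum_(i < d) (x ord0 i - y ord0 i) ^+ 2).

Definition diam (R : realType) (d : nat) (A : set 'rV[R]_d) : R :=
  sup [set r | exists x y, A x /\ A y /\ r = edist x y].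

Definition setdist (R : realType) (d : nat) (A B : set 'rV[R]_d) : R :=
  inf [set r | exists x y, A x /\ B y /\ r = edist x y].

Fixpoint gen (R : realType) (d : nat) (Q0 : set 'rV[R]_d)
    (ch : set 'rV[R]_d -> set (set 'rV[R]_d)) (k : nat) : set (set 'rV[R]_d) :=
  match k with
  | 0 => [set Q0]
  | k'.+1 => \bigcup_(Q in gen Q0 ch k') ch Q
  end.

Definition cubes (R : realType) (d : nat) (Q0 : set 'rV[R]_d)
    (ch : set 'rV[R]_d -> set (set 'rV[R]_d)) : set (set 'rV[R]_d) :=
  \bigcup_(k in [set: nat]) gen Q0 ch k.

Definition cantor_set (R : realType) (d : nat) (Q0 : set 'rV[R]_d)
    (ch : set 'rV[R]_d -> set (set 'rV[R]_d)) : set 'rV[R]_d :=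
  \bigcap_(k in [set: nat]) \bigcup_(Q in gen Q0 ch k) Q.

Definition cantor_construction (R : realType) (d : nat) (csep : R)
    (Q0 : set 'rV[R]_d) (ch : set 'rV[R]_d -> set (set 'rV[R]_d)) : Prop :=
  [/\ 0 < csep, compact Q0, 0 < diam Q0 &
   forall Q, cubes Q0 ch Q ->
     [/\ finite_set (ch Q), ch Q !=set0,
       (forall Q', ch Q Q' -> closed Q' /\ Q' `<=` Q),
       (forall Q', ch Q Q' -> diam Q / 8 <= diam Q' /\ diam Q' <= diam Q / 3) &
       (forall Q1 Q2, ch Q Q1 -> ch Q Q2 -> Q1 <> Q2 ->
          csep * diam Q <= setdist Q1 Q2)]].

Section Densities.
Variables (R : realType) (d : nat) (s : R).
Variables (Q0 : set 'rV[R]_d) (ch : set 'rV[R]_d -> set (set 'rV[R]_d)).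
Variable mu : set (Rd R d) -> \bar R.

Definition Theta (Q : set 'rV[R]_d) : R := fine (mu Q) / (diam Q `^ s).

(* p(Q) = sum over cubes P of D containing Q of l(Q)/l(P) Theta(P)
   (a finite sum: the ancestors of Q) *)
Definition pdens (Q : set 'rV[R]_d) : R :=
  (\sum_(P \in [set P | cubes Q0 ch P /\ Q `<=` P]) (diam Q / diam P * Theta P))%R.

Definition p_doubling (cdb : R) (Q : set 'rV[R]_d) : Prop :=
  pdens Q <= cdb * Theta Q.

Definition sigma (A : set (set 'rV[R]_d)) : \bar R :=
  (\esum_(P in A) (Theta P ^+ 2 * fine (mu P))%:E)%E.
End Densities.

(* Main.v *)
Require Import Defs.
From HB Require Import structures.
From mathcomp Require Import all_boot all_order all_algebra.
From mathcomp Require Import all_classical all_reals all_analysis.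
From mathcomp Require Import finmap zify ring lra.
Set Implicit Arguments. Unset Strict Implicit. Unset Printing Implicit Defensive.
Import Order.TTheory GRing.Theory Num.Theory.
Import numFieldNormedType.Exports.
Local Open Scope classical_set_scope.
Local Open Scope ring_scope.

Lemma closed_meas (R : realType) (d : nat) (A : set 'rV[R]_d) :
  closed A -> measurable (A : set (Rd R d)).
Proof.
move=> cA; rewrite -(setCK A); apply: measurableC; apply: sub_gen_smallest.
exact: closed_openC.
Qed.

Lemma gen_cubes (R : realType) (d : nat) (Q0 : set 'rV[R]_d) ch k A :
  gen Q0 ch k A -> cubes Q0 ch A.
Proof. by move=> h; exists k. Qed.

Lemma gen_S (R : realType) (d : nat) (Q0 : set 'rV[R]_d) ch k A B :
  gen Q0 ch k A -> ch A B -> gen Q0 ch k.+1 B.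
Proof. by move=> hA hB; exists A. Qed.

Lemma gen_prop (R : realType) (d : nat) (csep : R) (Q0 : set 'rV[R]_d) ch k A :
  cantor_construction csep Q0 ch -> gen Q0 ch k A -> 0 < diam A /\ closed A.
Proof.
case=> hc hQ0 hd hch; elim: k A => [|k IH] A /=.
  move=> ->; split => //; apply: compact_closed => //; exact: norm_hausdorff.
case=> A' hA' hAA'; have [dA' _] := IH _ hA'.
have [_ _ hcl hdi _] := hch A' (gen_cubes hA').
split; last by case: (hcl _ hAA').
have [h8 _] := hdi _ hAA'; apply: lt_le_trans h8; exact: divr_gt0.
Qed.

Lemma edist_ge0 (R : realType) (d : nat) (x y : 'rV[R]_d) : 0 <= Defs.edist x y.
Proof. exact: sqrtr_ge0. Qed.

Lemma edist_xx (R : realType) (d : nat) (x : 'rV[R]_d) : Defs.edist x x = 0.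
Proof.
rewrite /Defs.edist big1 ?sqrtr0 // => i _; by rewrite subrr expr0n.
Qed.

Lemma gen_disj (R : realType) (d : nat) (csep : R) (Q0 : set 'rV[R]_d) ch k A B :
  cantor_construction csep Q0 ch -> gen Q0 ch k A -> gen Q0 ch k B ->
  (A `&` B) !=set0 -> A = B.
Proof.
move=> cc; have [hc hQ0 hd hch] := cc.
elim: k A B => [|k IH] A B /=; first by move=> -> ->.
case=> A' hA' hAA' [B' hB' hBB'] [x [xA xB]].
have [_ _ hcl _ hsep] := hch A' (gen_cubes hA').
have [_ _ hclB _ _] := hch B' (gen_cubes hB').
have eAB' : A' = B'.
  apply: IH => //; exists x; split; first exact: (proj2 (hcl _ hAA')).
  exact: (proj2 (hclB _ hBB')).
subst B'.
apply: contrapT => nAB.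
have := hsep _ _ hAA' hBB' nAB.
have [dA' _] := gen_prop cc hA'.
have : setdist A B <= 0.
  rewrite /setdist; set S := [set r | _].
  have hl : has_lbound S.
    by exists 0 => r [u [v [_ [_ ->]]]]; exact: edist_ge0.
  apply: (ge_inf hl); exists x, x; split => //; split => //; by rewrite edist_xx.
move=> h1 h2; have := le_trans h2 h1; rewrite leNgt => /negP; apply.
exact: mulr_gt0.
Qed.
Definition chainQ (T : Type) (ch : set T -> set (set T)) (n : nat) (Qs : nat -> set T) :=
  forall j, (0 < j <= n)%N -> ch (Qs j.-1) (Qs j).

Lemma anc (R : realType) (d : nat) (Q0 : set 'rV[R]_d) ch k i P :
  gen Q0 ch (k + i) P ->
  exists Qs, [/\ gen Q0 ch k (Qs 0%N), Qs i = P & chainQ ch i Qs].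
Proof.
elim: i P => [|i IH] P.
  rewrite addn0 => hP; exists (fun _ => P); split => //.
  by move=> j; rewrite leqn0 andbC => /andP[/eqP ->].
rewrite addnS => -[A hA hAP].
have [Qs [h0 hi hc]] := IH _ hA.
exists (fun l => if l == i.+1 then P else Qs l); split => //=; first by rewrite eqxx.
move=> j /andP[j0 ji]; have -> : (j.-1 == i.+1) = false by apply/eqP; lia.
case: eqP => [ej|nej]; first by subst j; rewrite /= hi.
apply: hc; rewrite j0 /=; rewrite leq_eqVlt in ji.
by case/orP: ji => [/eqP//|].
Qed.

Lemma chain_gen (R : realType) (d : nat) (Q0 : set 'rV[R]_d) ch k n Qs :
  gen Q0 ch k (Qs 0%N) -> chainQ ch n Qs -> forall l, (l <= n)%N -> gen Q0 ch (k + l) (Qs l).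
Proof.
move=> h0 hc; elim => [|l IH] hl; first by rewrite addn0.
rewrite addnS; apply: (gen_S (IH (ltnW hl))).
exact: (hc l.+1).
Qed.

Lemma chain_sub (R : realType) (d : nat) (csep : R) (Q0 : set 'rV[R]_d) ch k n Qs :
  cantor_construction csep Q0 ch ->
  gen Q0 ch k (Qs 0%N) -> chainQ ch n Qs ->
  forall l m, (l <= m)%N -> (m <= n)%N -> Qs m `<=` Qs l.
Proof.
move=> [_ _ _ hch] h0 hc l; elim => [|m IH] hlm hmn.
  by rewrite leqn0 in hlm; rewrite (eqP hlm).
rewrite leq_eqVlt in hlm; case/orP: hlm => [/eqP -> //|hlm].
apply: subset_trans (IH hlm (ltnW hmn)).
have hg := chain_gen h0 hc (ltnW hmn).
have [_ _ hcl _ _] := hch _ (gen_cubes hg).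
exact: (proj2 (hcl _ (hc m.+1 hmn))).
Qed.
Lemma sum_disj (R : realType) (d : nat) (csep : R) (Q0 : set 'rV[R]_d) ch
  (mu : {finite_measure set (Rd R d) -> \bar R}) K (t : seq (set 'rV[R]_d)) (Q : set 'rV[R]_d) :
  cantor_construction csep Q0 ch -> closed Q -> uniq t ->
  (forall P, P \in t -> gen Q0 ch K P /\ P `<=` Q) ->
  \sum_(P <- t) fine (mu P) <= fine (mu Q).
Proof.
move=> cc cQ.
have H : uniq t -> (forall P, P \in t -> gen Q0 ch K P /\ P `<=` Q) ->
  [/\ (\sum_(P <- t) mu P = mu (\big[setU/set0]_(P <- t) P))%E,
      measurable (\big[setU/set0]_(P <- t) P : set (Rd R d)),
      (\big[setU/set0]_(P <- t) P) `<=` Q &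
      forall x, (\big[setU/set0]_(P <- t) P) x -> exists2 P, P \in t & P x].
  elim: t => [|a t IH].
    move=> _ _; rewrite !big_nil measure0; split => //; exact: measurable0.
  rewrite /= => /andP[na ut] ht.
  have [e1 m1 s1 x1] := IH ut (fun P Pt => ht P (ltac:(by rewrite inE Pt orbT))).
  have [ga sa] := ht a (mem_head _ _).
  have ma : measurable (a : set (Rd R d)) by apply: closed_meas; exact: (proj2 (gen_prop cc ga)).
  rewrite !big_cons; split.
  - rewrite measureU //; first by rewrite e1.
    apply/seteqP; split => x // [xa /x1 [P Pt Px]].
    have [gP _] := ht P (ltac:(by rewrite inE Pt orbT)).
    have eaP := gen_disj cc ga gP (ex_intro _ x (conj xa Px)).
    by move: na; rewrite eaP Pt.
  - exact: measurableU.
  - by move=> x [/sa|/s1].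
  - move=> x [xa|/x1 [P Pt Px]]; first by exists a => //; exact: mem_head.
    by exists P => //; by rewrite inE Pt orbT.
move=> ut ht; have [e1 m1 s1 _] := H ut ht.
have mQ : measurable (Q : set (Rd R d)) by exact: closed_meas.
rewrite -lee_fin -sumEFin.
have -> : (\sum_(P <- t) (fine (mu P))%:E = \sum_(P <- t) mu P)%E.
  rewrite big_seq [RHS]big_seq; apply: eq_bigr => P Pt.
  have [gP _] := ht P Pt.
  rewrite fineK // fin_num_measure //; apply: closed_meas; exact: (proj2 (gen_prop cc gP)).
rewrite e1 fineK ?fin_num_measure //.
by apply: le_measure => //; apply/mem_set.
Qed.

Lemma geo_eq (R : realFieldType) N :
  \sum_(j < N) ((2:R) ^+ j)^-1 = 2 - 2 * ((2:R) ^+ N)^-1.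
Proof.
elim: N => [|n IH]; first by rewrite big_ord0 expr0 invr1 mulr1 subrr.
rewrite big_ord_recr /= IH exprS invfM mulrA mulfV ?pnatr_eq0 // mul1r.
set x := (2 ^+ n)^-1; lra.
Qed.

Lemma geo (R : realFieldType) N : \sum_(j < N) ((2:R) ^+ j)^-1 <= 2.
Proof.
rewrite geo_eq; have : 0 <= ((2:R) ^+ N)^-1 by rewrite invr_ge0 exprn_ge0.
set x := (_ ^+ N)^-1; lra.
Qed.

Lemma pow_half (R : realType) (n : nat) :
  (2:R) `^ (- (n%:R / 2)) * 2 `^ (- (n%:R / 2)) = ((2:R) ^+ n)^-1.
Proof.
rewrite -powRD; last by apply/implyP => _; rewrite pnatr_eq0.
by rewrite -opprD -splitr powRN powR_mulrn.
Qed.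

Theorem lemma2p2 (R : realType) (d : nat) (s : R) (csep cdb : R)
  (Q0 : set 'rV[R]_d) (ch : set 'rV[R]_d -> set (set 'rV[R]_d))
  (mu : {finite_measure set (Rd R d) -> \bar R}) :
  0 < s -> s < d%:R ->
  cantor_construction csep Q0 ch ->
  mu (~` cantor_set Q0 ch) = 0%E ->
  (forall Q, cubes Q0 ch Q -> (0 < mu Q)%E) ->
  (* choice of c_db: the chain property *)
  (forall (n : nat) (Qs : nat -> set 'rV[R]_d),
     cubes Q0 ch (Qs 0%N) ->
     (forall j : nat, (1 <= j <= n)%N ->
        ch (Qs j.-1) (Qs j) /\ ~ p_doubling s Q0 ch mu cdb (Qs j)) ->
     forall j : nat, (j <= n)%N ->
       Theta s mu (Qs j) <= 2 `^ (- (j%:R / 2)) * pdens s Q0 ch mu (Qs 0%N)) ->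
  forall (Q : set 'rV[R]_d) (J : set (set 'rV[R]_d)),
    cubes Q0 ch Q ->
    (forall P, J P -> cubes Q0 ch P /\ P `<=` Q) ->
    (forall P, J P -> forall P', cubes Q0 ch P' -> P `<=` P' -> P' `<=` Q ->
       ~ p_doubling s Q0 ch mu cdb P') ->
    (sigma s mu J <= (2 * pdens s Q0 ch mu Q ^+ 2 * fine (mu Q))%:E)%E.
Proof.
move=> s0 sd cc mu0 mupos chainH Q J HQ HJ HJnd.
have [k _ gQ] := HQ.
have cQ : closed Q := proj2 (gen_prop cc gQ).
set p := pdens s Q0 ch mu Q.
have dep_ex : forall P, exists j : nat, J P ->
    exists Qs, [/\ Qs 0%N = Q, Qs j = P & chainQ ch j Qs].
  move=> P; case: (pselect (J P)) => JP; last by exists 0%N.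
  have [[m _ gP] PQ] := HJ P JP.
  have [x Px] : P !=set0.
    apply/set0P/eqP => P0; have := mupos P (HJ P JP).1.
    by rewrite P0 measure0 ltxx.
  case: (leqP k m) => km.
    have [Qs [g0 hi hc]] := @anc _ _ Q0 ch k (m - k) P ltac:(by rewrite subnKC).
    have sP : P `<=` Qs 0%N by rewrite -hi; exact: (chain_sub cc g0 hc).
    have e0 : Qs 0%N = Q.
      by apply: (gen_disj cc g0 gQ); exists x; split; [exact: sP|exact: PQ].
    by exists (m - k)%N => _; exists Qs.
  have [Qs [g0 hi hc]] := @anc _ _ Q0 ch m (k - m) Q ltac:(by rewrite subnKC // ltnW).
  have sQ : Q `<=` Qs 0%N by rewrite -hi; exact: (chain_sub cc g0 hc).
  have eP : P = Qs 0%N.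
    by apply: (gen_disj cc gP g0); exists x; split => //; exact/sQ/PQ.
  have ePQ : P = Q by apply/seteqP; split => //; rewrite eP.
  exists 0%N => _; exists (fun _ => Q); split => //.
  by move=> j; rewrite leqn0 andbC => /andP[/eqP ->].
have [dep hdep] := choice dep_ex.
have bnd : forall P, J P -> gen Q0 ch (k + dep P) P /\
    Theta s mu P ^+ 2 <= ((2:R) ^+ dep P)^-1 * p ^+ 2.
  move=> P JP; have [Qs [e0 ej hc]] := hdep P JP.
  have g0 : gen Q0 ch k (Qs 0%N) by rewrite e0.
  split; first by rewrite -[X in gen _ _ _ X]ej; exact: (chain_gen g0 hc (leqnn _)).
  have h1 : cubes Q0 ch (Qs 0%N) by rewrite e0.
  have h2 : forall l : nat, (1 <= l <= dep P)%N ->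
      ch (Qs l.-1) (Qs l) /\ ~ p_doubling s Q0 ch mu cdb (Qs l).
    move=> l hl; split; first exact: hc.
    have hln : (l <= dep P)%N by case/andP: hl.
    apply: (HJnd P JP).
    - exact: gen_cubes (chain_gen g0 hc hln).
    - by rewrite -[X in X `<=` _]ej; exact: (chain_sub cc g0 hc).
    - by rewrite -[X in _ `<=` X]e0; exact: (chain_sub cc g0 hc).
  have hT := chainH (dep P) Qs h1 h2 (dep P) (leqnn _).
  rewrite e0 ej in hT.
  have T0 : 0 <= Theta s mu P.
    by rewrite /Theta divr_ge0 // ?fine_ge0 ?measure_ge0 ?powR_ge0.
  rewrite expr2; apply: le_trans (ler_pM T0 T0 hT hT) _.
  by rewrite mulrACA pow_half -expr2.
rewrite /sigma /esum; apply: ge_ereal_sup => _ [X [finX XJ] <-].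
rewrite fsumEFin // lee_fin fsbig_finite //=.
set t := fset_set X.
have tJ : forall P, P \in t -> J P.
  by move=> P; rewrite in_fset_set // => /set_mem/XJ.
have ut : uniq t := fset_uniq _.
set N := (\max_(P <- t) dep P).+1.
rewrite (@partition_big _ _ _ _ _ _ xpredT (fun P => (inord (dep P) : 'I_N)) xpredT) //=.
have mQ0 : 0 <= fine (mu Q) by rewrite fine_ge0 ?measure_ge0.
apply: (@le_trans _ _ (\sum_(j : 'I_N) ((2:R) ^+ j)^-1 * (p ^+ 2 * fine (mu Q)))).
  apply: ler_sum => j _.
  apply: (@le_trans _ _ (\sum_(P <- t | inord (dep P) == j)
      ((2:R) ^+ j)^-1 * p ^+ 2 * fine (mu P))).
    rewrite big_seq_cond [X in _ <= X]big_seq_cond; apply: ler_sum => P.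
    case/andP => Pt /eqP Pj.
    have dl : (dep P < N)%N by rewrite ltnS; exact: leq_bigmax_seq.
    have dPj : dep P = j by rewrite -Pj inordK.
    have [_ hb] := bnd P (tJ P Pt); rewrite -dPj.
    by apply: ler_wpM2r => //; rewrite fine_ge0 ?measure_ge0.
  rewrite -mulr_sumr.
  have -> : ((2:R) ^+ j)^-1 * (p ^+ 2 * fine (mu Q)) =
     ((2:R) ^+ j)^-1 * p ^+ 2 * fine (mu Q) by rewrite mulrA.
  apply: ler_wpM2l.
    by rewrite mulr_ge0 ?sqr_ge0 // invr_ge0 exprn_ge0.
  rewrite -[X in X <= _]big_filter; apply: (@sum_disj _ _ csep Q0 ch mu (k + j)) => //.
    exact: filter_uniq.
  move=> P; rewrite mem_filter => /andP[/eqP Pj Pt].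
  have dl : (dep P < N)%N by rewrite ltnS; exact: leq_bigmax_seq.
  have dPj : dep P = j by rewrite -Pj inordK.
  have [gP _] := bnd P (tJ P Pt); rewrite -dPj; split => //.
  exact: (HJ P (tJ P Pt)).2.
rewrite -mulr_suml -mulrA; apply: ler_wpM2r; last exact: geo.
by rewrite mulr_ge0 ?sqr_ge0.
Qed.
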